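(* Let $G=(V,E)$ be an edge-weighted graph with linearly ordered edge weights, let $\nabla(G)\subseteq V$, and let $H$ be a graph with $V(H)\supseteq\nabla(G)$. Then the following are equivalent: (i) $H$ compresses $G$ with respect to $\nabla(G)$; (ii) for every $u,v\in\nabla(G)$ and every weight $w$, $H$ contains a $u$–$v$ path whose maximum edge weight is $<w$ if and only if $G$ contains such a $u$–$v$ path.
   Context: Edge weights are linearly ordered (distinct), so minimum spanning trees (forests) are unique; $T(X)$ denotes the minimum spanning tree of $X$. Definition: a graph $H$ with $V(H)\supseteq\nabla(G)$ compresses $G$ with respect to $\nabla(G)$ if for every graph $G'\supseteq G$ in which every vertex of $G$ adjacent to a vertex outside $G$ lies in $\nabla(G)$, letting $T$ be the minimum spanning tree of $G'$ and $T'$ the minimum spanning tree of $(G'\setminus G)\cup H$ (where $G'\setminus G$ denotes the edges of $G'$ not in $G$), it holds $T\cap(G'\setminus G)=T'\cap(G'\setminus G)$.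
   Formalization: In compresses, G' qualifies when every vertex of G incident to an edge of G'∖G, rather than adjacent to a vertex outside G, lies in ∇(G) and such edges meet V(H) only in ∇(G); weights lie in an ordered field. Apart from conventions, each condition added here is assumed in the paper as well or is needed for the statement above to hold. *)

(* Defs.v *)
From HB Require Import structures.
From mathcomp Require Import all_boot all_order all_algebra.
From mathcomp Require Import finmap.
Set Implicit Arguments. Unset Strict Implicit. Unset Printing Implicit Defensive.
Import Order.TTheory GRing.Theory Num.Theory.
Local Open Scope ring_scope.
Local Open Scope fset_scope.

Section Graphs.
Variables (V : choiceType) (R : realFieldType).

Definition edge := ((V * V) * R)%type.

Record graph := Graph { gV : {fset V}; gE : {fset edge} }.

Definition wf (g : graph) : Prop :=
  forall e, e \in gE g -> e.1.1 \in gV g /\ e.1.2 \in gV g.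

Definition subgraph (g g' : graph) : Prop :=
  gV g `<=` gV g' /\ gE g `<=` gE g'.

Definition distinct_w (S : {fset edge}) : Prop :=
  {in S &, injective (fun e : edge => e.2)}.

Definition joins (e : edge) (x y : V) : bool :=
  (e.1 == (x, y)) || (e.1 == (y, x)).

Definition endpoint (e : edge) (x : V) : bool := (x == e.1.1) || (x == e.1.2).

Fixpoint walk (S : {fset edge}) (x : V) (p : seq (edge * V)) : bool :=
  if p is (e, y) :: p' then [&& e \in S, joins e x y & walk S y p'] else true.

Definition gpath (S : {fset edge}) (u v : V) (p : seq (edge * V)) : bool :=
  [&& walk S u p, last u (map snd p) == v & uniq (u :: map snd p)].

Definition path_below (S : {fset edge}) (u v : V) (c : R) : Prop :=
  exists p, gpath S u v p /\ all (fun ev : edge * V => ev.1.2 < c) p.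

Definition connected (S : {fset edge}) (x y : V) : Prop :=
  exists p, gpath S x y p.

(* acyclic: no edge of F closes a cycle with the other edges of F
   (self-loops are excluded, since x is connected to itself) *)
Definition forest (F : {fset edge}) : Prop :=
  forall e, e \in F -> ~ connected (F `\ e) e.1.1 e.1.2.

Definition spanning_forest (S F : {fset edge}) : Prop :=
  [/\ F `<=` S, forest F & forall x y, connected S x y -> connected F x y].

Definition msf (S T : {fset edge}) : Prop :=
  spanning_forest S T /\
  forall F, spanning_forest S F -> \sum_(e <- T) e.2 <= \sum_(e <- F) e.2.

Definition compresses (G H : graph) (nab : {fset V}) : Prop :=
  forall G' : graph,
    wf G' -> subgraph G G' ->
    distinct_w (gE G') ->
    distinct_w ((gE G' `\` gE G) `|` gE H) ->
    (forall e, e \in gE G' `\` gE G -> forall x, endpoint e x ->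
        x \in gV G -> x \in nab) ->
    (* the extra vertices of H are not touched by G' \ G *)
    (forall e, e \in gE G' `\` gE G -> forall x, endpoint e x ->
        x \in gV H -> x \in nab) ->
    forall T T', msf (gE G') T -> msf ((gE G' `\` gE G) `|` gE H) T' ->
      T `&` (gE G' `\` gE G) = T' `&` (gE G' `\` gE G).

End Graphs.

(* Main.v *)
Require Import Defs.
From HB Require Import structures.
From mathcomp Require Import all_boot all_order all_algebra.
From mathcomp Require Import finmap.
From Stdlib Require Import Classical.
From mathcomp Require Import lra.
Import Order.TTheory GRing.Theory Num.Theory.
Set Implicit Arguments. Unset Strict Implicit. Unset Printing Implicit Defensive.
Local Open Scope ring_scope.
Local Open Scope fset_scope.

Section Aux.
Variables (V : choiceType) (R : realFieldType).
Local Open Scope ring_scope.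
Notation edge := (edge V R).
Implicit Types (S T A B : {fset edge}) (x y z : V) (p q : seq (edge * V)) (e f g r : edge).

Definition wc S x y := exists p, walk S x p && (last x (map snd p) == y).

Definition below S (c : R) := [fset e in S | e.2 < c].

Lemma in_below S c e : (e \in below S c) = (e \in S) && (e.2 < c).
Proof. by rewrite /below !inE. Qed.

Lemma joinsC e x y : joins e x y = joins e y x.
Proof. by rewrite /joins orbC. Qed.

Lemma wc_refl S x : wc S x x.
Proof. by rewrite /wc; exists [::]; rewrite /= eqxx. Qed.

Lemma wc_edge S e x y : e \in S -> joins e x y -> wc S x y.
Proof. by move=> eS j; rewrite /wc; exists [:: (e, y)]; rewrite /= eS j eqxx. Qed.

Lemma walk_cat S x p q : walk S x (p ++ q) = walk S x p && walk S (last x (map snd p)) q.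
Proof.
elim: p x => [|[e z] p IH] x //=.
by rewrite IH !andbA.
Qed.

Lemma wc_trans S x y z : wc S x y -> wc S y z -> wc S x z.
Proof.
move=> [p /andP[w1 /eqP l1]] [q /andP[w2 /eqP l2]].
rewrite /wc; exists (p ++ q); rewrite walk_cat w1 l1 w2 /= map_cat last_cat l1 l2 eqxx //.
Qed.

Lemma wc_sym S x y : wc S x y -> wc S y x.
Proof.
move=> [p /andP[w /eqP <-]]; elim: p x w => [|[e z] p IH] x /=.
  by move=> _; apply: wc_refl.
case/and3P=> eS j rest.
apply: wc_trans (IH z rest) _.
by apply: wc_edge eS _; rewrite joinsC.
Qed.

Lemma walk_mono S S' x p : {subset S <= S'} -> walk S x p -> walk S' x p.
Proof.
move=> sub; elim: p x => [|[e z] p IH] x //=.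
by case/and3P=> eS j w; rewrite sub // j IH.
Qed.

Lemma wc_mono S S' x y : {subset S <= S'} -> wc S x y -> wc S' x y.
Proof. by move=> sub [p /andP[w l]]; rewrite /wc; exists p; rewrite (walk_mono sub w) l. Qed.

Lemma joinsE e x y : joins e x y -> (e.1.1 = x /\ e.1.2 = y) \/ (e.1.1 = y /\ e.1.2 = x).
Proof.
case: e => [[a b] r]; rewrite /joins /=.
by case/orP=> /eqP [-> ->]; [left|right].
Qed.

Lemma wc_sub_edges A B x y : (forall e, e \in A -> wc B e.1.1 e.1.2) -> wc A x y -> wc B x y.
Proof.
move=> H [p /andP[w /eqP <-]]; elim: p x w => [|[e z] p IH] x /=.
  by move=> _; apply: wc_refl.
case/and3P=> eA j rest.
apply: wc_trans (IH z rest).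
by case: (joinsE j) => [[<- <-]|[<- <-]]; [|apply: wc_sym]; apply: H.
Qed.

Lemma wc_remove S r x y : wc S x y ->
  wc (S `\ r) x y \/
  ((wc (S `\ r) x r.1.1 \/ wc (S `\ r) x r.1.2) /\
   (wc (S `\ r) r.1.1 y \/ wc (S `\ r) r.1.2 y)).
Proof.
move=> [p /andP[w /eqP <-]]; elim: p x w => [|[e z] p IH] x /=.
  by move=> _; left; apply: wc_refl.
case/and3P=> eS j rest.
have [er | ner] := eqVneq e r.
  subst e.
  have Hx : wc (S `\ r) x r.1.1 \/ wc (S `\ r) x r.1.2.
    by case: (joinsE j) => [[<- _]|[_ <-]]; [left|right]; apply: wc_refl.
  right; split => //.
  case: (IH z rest) => [zy|[_ //]].
  by case: (joinsE j) => [[_ zE]|[zE _]]; [right|left]; rewrite zE.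
have ez : wc (S `\ r) x z by apply: wc_edge j; rewrite !inE ner.
case: (IH z rest) => [zy|[[zr|zr] ry]]; first by left; apply: wc_trans zy.
  by right; split => //; left; apply: wc_trans zr.
by right; split => //; right; apply: wc_trans zr.
Qed.

Lemma shorten S x p : walk S x p -> exists q, gpath S x (last x (map snd p)) q.
Proof.
elim: p x => [|[f z] p IH] x /=.
  by move=> _; exists [::]; rewrite /gpath /= eqxx.
case/and3P=> fS j w.
have [q /and3P[wq /eqP lq uq]] := IH z w.
have [xz|nxz] := eqVneq x z.
  by subst z; exists q; rewrite /gpath wq lq eqxx uq.
case: (boolP (x \in map snd q)) => [/mapP[ev evq xev]|xq].
  case/splitPr: evq wq lq uq => q1 q2.
  rewrite walk_cat map_cat last_cat /= => /andP[_ w2] lq.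
  rewrite cat_uniq /= => /and3P[_ _ /andP[_ u2]].
  exists q2; rewrite /gpath.
  case: ev w2 lq xev u2 => e' x' /= /and3P[_ _ w2] lq xev u2.
  subst x'; rewrite w2 lq eqxx /=.
  exact: u2.
exists ((f, z) :: q); rewrite /gpath /= fS j wq lq eqxx /=.
by rewrite in_cons negb_or nxz xq; exact: uq.
Qed.

Lemma connected_wc S x y : connected S x y <-> wc S x y.
Proof.
split.
  by move=> [p /and3P[w l _]]; exists p; rewrite w l.
move=> [p /andP[w /eqP <-]]; exact: shorten w.
Qed.

Lemma walk_below S c x p : walk (below S c) x p = walk S x p && all (fun ev : edge * V => ev.1.2 < c) p.
Proof.
elim: p x => [|[e z] p IH] x //=.
rewrite IH in_below; case: (e \in S); case: (e.2 < c); case: (joins e x z) => //=.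
by rewrite andbF.
Qed.

Lemma path_below_wc S u v c : path_below S u v c <-> wc (below S c) u v.
Proof.
split.
  move=> [p [/and3P[w l _] a]]; exists p; by rewrite walk_below w a l.
move=> /connected_wc [p /and3P[w l uq]]; exists p.
move: w; rewrite walk_below => /andP[w a].
by rewrite /gpath w l uq a.
Qed.

Lemma joins_self e : joins e e.1.1 e.1.2.
Proof. by case: e => [[a b] c]; rewrite /joins /= eqxx. Qed.

Lemma wc_edge_self S e : e \in S -> wc S e.1.1 e.1.2.
Proof. by move=> eS; apply: wc_edge eS (joins_self e). Qed.

Lemma forest_wc F : forest F <-> forall e, e \in F -> ~ wc (F `\ e) e.1.1 e.1.2.
Proof.
split=> H e eF; have := H e eF; by [move=> nc /connected_wc | move=> nc /connected_wc].
Qed.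

Definition sf S F := [/\ F `<=` S, forall e, e \in F -> ~ wc (F `\ e) e.1.1 e.1.2
   & forall x y, wc S x y -> wc F x y].

Lemma sfE S F : spanning_forest S F <-> sf S F.
Proof.
split=> [[h1 h2 h3]|[h1 h2 h3]]; split => //.
- by apply/forest_wc.
- by move=> x y /connected_wc /h3 /connected_wc.
- by apply/forest_wc.
- by move=> x y /connected_wc /h3 /connected_wc.
Qed.

Lemma exchange S T r a : sf S T -> r \in T -> a \in S -> a \notin T ->
  ~ wc (T `\ r) a.1.1 a.1.2 -> sf S (a |` (T `\ r)).
Proof.
move=> [sTS fT spT] rT aS aT nc.
set T' := a |` (T `\ r).
have sub1 : {subset T `\ r <= T'} by move=> e; rewrite !inE => ->; rewrite orbT.
have aT' : a \in T' by rewrite !inE eqxx.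
have wca : wc T' a.1.1 a.1.2 := wc_edge_self aT'.
have wcT : wc T a.1.1 a.1.2 by apply: spT; apply: wc_edge_self.
have rT' : wc T' r.1.1 r.1.2.
  case: (wc_remove r wcT) => [//|[[h1|h1] [h2|h2]]].
  - by exfalso; apply: nc; apply: wc_trans h1 h2.
  - apply: wc_trans (wc_mono sub1 (wc_sym h1)) _.
    by apply: wc_trans wca (wc_mono sub1 (wc_sym h2)).
  - apply: wc_trans (wc_mono sub1 h2) _.
    by apply: wc_trans (wc_sym wca) (wc_mono sub1 h1).
  - by exfalso; apply: nc; apply: wc_trans h1 h2.
split.
- apply/fsubsetP => e; rewrite !inE => /orP[/eqP -> //|/andP[_ eT]].
  by apply: (fsubsetP sTS).
- move=> g gT' cg.
  have [ga|nga] := eqVneq g a.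
    subst g; apply: nc; apply: wc_mono cg => e; rewrite !inE.
    by case/andP=> /negbTE -> /=.
  have gTr : g \in T `\ r by move: gT'; rewrite !inE (negbTE nga).
  have gT : g \in T by move: gTr; rewrite !inE => /andP[].
  have sK1 : {subset (T' `\ g) `\ a <= T `\ g}.
    move=> e; rewrite !inE => /andP[ea /andP[-> /orP[/eqP eqa|/andP[_ ->]]]] //.
    by rewrite eqa eqxx in ea.
  have sK2 : {subset (T' `\ g) `\ a <= T `\ r}.
    move=> e; rewrite !inE => /andP[ea /andP[_ /orP[/eqP eqa|/andP[-> ->]]]] //.
    by rewrite eqa eqxx in ea.
  have eg : wc (T `\ r) g.1.1 g.1.2 := wc_edge_self gTr.
  have nc' : forall u v, wc (T `\ r) u a.1.1 -> wc (T `\ r) u v -> wc (T `\ r) v a.1.2 -> False.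
    by move=> u v h1 h2 h3; apply: nc; apply: wc_trans (wc_trans h2 h3); apply: wc_sym.
  case: (wc_remove a cg) => [h|[[h1|h1] [h2|h2]]].
  - by apply: (fT g gT); apply: wc_mono h.
  - by apply: (fT g gT); apply: wc_mono sK1 (wc_trans h1 h2).
  - exact: (nc' _ _ (wc_mono sK2 h1) eg (wc_sym (wc_mono sK2 h2))).
  - exact: (nc' _ _ (wc_sym (wc_mono sK2 h2)) (wc_sym eg) (wc_mono sK2 h1)).
  - by apply: (fT g gT); apply: wc_mono sK1 (wc_trans h1 h2).
- move=> x y /spT; apply: wc_sub_edges => e eT.
  have [-> //|ner] := eqVneq e r.
  by apply: wc_edge_self; rewrite !inE ner eT orbT.
Qed.

Lemma sum_exchange T r a : r \in T -> a \notin T ->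
  (\sum_(e <- a |` (T `\ r)) e.2 = a.2 + (\sum_(e <- T) e.2 - r.2))%R.
Proof.
move=> rT aT.
rewrite big_fsetU1; last by rewrite !inE negb_and aT orbT.
by rewrite (big_fsetD1 _ rT) /= [(r.2 + _)%R]addrC addrK.
Qed.

Lemma cross S (C : V -> Prop) x p : walk S x p -> ~ C (last x (map snd p)) ->
  (~ C x /\ forall ev, ev \in p -> ~ C ev.1.1.1 /\ ~ C ev.1.1.2) \/
  exists f a b, [/\ f \in S, joins f a b, C a, ~ C b & exists q, [/\ walk S b q,
    last b (map snd q) = last x (map snd p) &
    forall ev, ev \in q -> ~ C ev.1.1.1 /\ ~ C ev.1.1.2]].
Proof.
elim: p x => [|[f z] p IH] x /=.
  by move=> _ nC; left; split.
case/and3P=> fS j w nC.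
case: (IH z w nC) => [[nz hp]|[f' [a [b H]]]]; last first.
  by right; exists f', a, b.
case: (classic (C x)) => cx.
  by right; exists f, x, z; split => //; exists p.
left; split => // ev; rewrite in_cons => /orP[/eqP ->|]; last exact: hp.
by case: (joinsE j) => /= [[-> ->]|[-> ->]].
Qed.

Lemma walk_sub S S' x q : walk S x q -> (forall ev, ev \in q -> ev.1 \in S -> ev.1 \in S') -> walk S' x q.
Proof.
elim: q x => [|[e z] q IH] x //= /and3P[eS j w] H.
rewrite (H (e, z)) ?mem_head //= j IH // => ev evq.
by apply: H; rewrite in_cons evq orbT.
Qed.

Definition msf' S T := sf S T /\ forall F, sf S F -> \sum_(e <- T) e.2 <= \sum_(e <- F) e.2.

Lemma msfE S T : msf S T <-> msf' S T.
Proof.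
split=> [[/sfE h1 h2]|[/sfE h1 h2]]; split => // F /sfE; [exact: h2 | exact: h2].
Qed.

Lemma CP S T e : distinct_w S -> msf' S T -> e \in S ->
  (e \in T <-> ~ wc (below S e.2) e.1.1 e.1.2).
Proof.
move=> dS [[sTS fT spT] mT] eS; split.
  move=> eT [q /andP[wq /eqP lq]].
  pose C v := wc (T `\ e) e.1.1 v.
  case: (@cross _ C _ _ wq _); first by rewrite lq; apply: fT.
    by case=> nC _; apply: nC; apply: wc_refl.
  move=> [f [a [b [fB j Ca nCb _]]]].
  move: fB; rewrite in_below => /andP[fS flt].
  have fe : f != e by apply/eqP => fe; rewrite fe ltxx in flt.
  have fT' : f \notin T.
    apply/negP => fT'; apply: nCb; apply: wc_trans Ca _.
    by apply: wc_edge j; rewrite !inE fe fT'.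
  have nc : ~ wc (T `\ e) f.1.1 f.1.2.
    case: (joinsE j) => [[-> ->]|[-> ->]] h; apply: nCb; apply: wc_trans Ca _ => //.
    exact: wc_sym.
  have := mT _ (exchange (And3 sTS fT spT) eT fS fT' nc).
  rewrite sum_exchange // addrCA lerDl subr_ge0 leNgt flt; done.
move=> nH; case: (classic (e \in T)) => // eT; exfalso.
have [p /andP[wp /eqP lp]] := spT _ _ (wc_edge_self eS).
pose C v := wc (below T e.2) e.1.1 v.
have subB : {subset below T e.2 <= below S e.2}.
  by move=> g; rewrite !in_below => /andP[/(fsubsetP sTS) -> ->].
case: (@cross _ C _ _ wp _).
- by rewrite lp => h; apply: nH; apply: wc_mono h.
- by case=> nC _; apply: nC; apply: wc_refl.
move=> [f [a [b [fT' j Ca nCb [q [wq lq hq]]]]]].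
have fge : ~~ (f.2 < e.2).
  apply/negP => flt; apply: nCb; apply: wc_trans Ca _.
  by apply: wc_edge j; rewrite in_below fT' flt.
have fe : f != e by apply/eqP => fe; apply: eT; rewrite -fe.
have fS : f \in S by apply: (fsubsetP sTS).
have fw : f.2 != e.2 by apply/eqP => h; move/eqP: fe; apply; apply: dS.
have elt : e.2 < f.2 by rewrite lt_neqAle eq_sym fw /=; move: fge; rewrite -leNgt.
have nc : ~ wc (T `\ f) e.1.1 e.1.2.
  move=> h.
  have h1 : wc (T `\ f) e.1.1 a.
    apply: wc_mono Ca => g; rewrite in_below !inE => /andP[-> glt]; rewrite andbT.
    by apply/eqP => gf; rewrite gf ltNge (ltW elt) in glt.
  have h2 : wc (T `\ f) b e.1.2.
    rewrite /wc; exists q; rewrite lq lp eqxx andbT.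
    apply: walk_sub wq _ => ev evq; rewrite !inE.
    have [n1 n2] := hq ev evq.
    move=> ->; rewrite andbT; apply/eqP => evf; rewrite evf in n1 n2.
    by case: (joinsE j) => [[e1 _]|[_ e2]]; [apply: n1; rewrite e1 | apply: n2; rewrite e2].
  have hab : wc (T `\ f) a b by apply: wc_trans (wc_sym h1) (wc_trans h (wc_sym h2)).
  apply: (fT f fT').
  by case: (joinsE j) => [[-> ->]|[-> ->]] //; apply: wc_sym.
have eT' : e \notin T by apply/negP.
have := mT _ (exchange (And3 sTS fT spT) fT' eS eT' nc).
by rewrite sum_exchange // addrCA lerDl subr_ge0 leNgt elt.
Qed.

Lemma exists_min (X : eqType) (s : seq X) (P : X -> Prop) (f : X -> R) :
  (exists w, w \in s /\ P w) ->
  exists w, [/\ w \in s, P w & forall u, u \in s -> P u -> f w <= f u].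
Proof.
elim: s => [|a s IH]; first by move=> [w []].
move=> hE; case: (classic (exists w, w \in s /\ P w)) => [/IH [m [ms Pm Hm]]|nE].
  case: (classic (P a /\ f a <= f m)) => [[Pa le]|nle].
    exists a; split => //; first exact: mem_head.
    move=> y; rewrite in_cons => /orP[/eqP -> //|ys Py].
    by apply: le_trans le (Hm y ys Py).
  exists m; split => //; first by rewrite in_cons ms orbT.
  move=> y; rewrite in_cons => /orP[/eqP -> Pa|ys Py]; last exact: Hm.
  have [//|lt] := boolP (f m <= f a).
  exfalso; apply: nle; split => //.
  by move: lt; rewrite -ltNge => /ltW.
case: (classic (P a)) => Pa.
  exists a; split => //; first exact: mem_head.
  move=> y; rewrite in_cons => /orP[/eqP -> //|ys Py].
  by exfalso; apply: nE; exists y.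
exfalso; case: hE => w []; rewrite in_cons => /orP[/eqP -> //|ws Pw].
by apply: nE; exists w.
Qed.

Lemma sf_exists S : exists F, sf S F.
Proof.
pose P (F : {fset edge}) := F `<=` S /\ forall x y, wc S x y -> wc F x y.
have [|F [_ [sFS spF] Hm]] := @exists_min _ (fpowerset S) P (fun F => (#|` F|)%:R).
  by exists S; rewrite fpowersetE fsubset_refl; split => //; split.
exists F; split => // g gF cg.
have PF' : P (F `\ g).
  split; first by apply: fsubset_trans (fsubsetDl _ _) sFS.
  move=> x y /spF; apply: wc_sub_edges => e eF.
  have [-> //|neg] := eqVneq e g.
  by apply: wc_edge_self; rewrite !inE neg eF.
have inP : F `\ g \in fpowerset S.
  by rewrite fpowersetE; apply: fsubset_trans (fsubsetDl _ _) sFS.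
have := Hm _ inP PF'.
by rewrite ler_nat (cardfsD1 g F) gF /= ltnn.
Qed.

Lemma msf_exists S : exists T, msf' S T.
Proof.
have [F sF] := sf_exists S.
have [|T [_ sT Hm]] := @exists_min _ (fpowerset S) (sf S) (fun F => \sum_(e <- F) e.2).
  by exists F; rewrite fpowersetE; case: sF.
exists T; split => // F' sF'; apply: Hm => //.
by rewrite fpowersetE; case: sF'.
Qed.

Lemma fresh (s : seq R) (c : R) : exists c', (forall w, w \in s -> (w < c) = (w < c')) /\ c' \notin s.
Proof.
pose step (w acc : R) := if w < c then (if acc < w then w else acc) else acc.
pose m := foldr step (c - 1) s.
have Hm : m < c /\ forall w, w \in s -> w < c -> w <= m.
  rewrite /m; clear m; elim: s => [|a s' [IH1 IH2]] /=.
    by split => //; lra.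
  rewrite /step; case: ifP => ac; [case: ifP => am|]; split => //.
  - move=> w; rewrite in_cons => /orP[/eqP -> //|ws wc].
    by apply: le_trans (IH2 w ws wc) (ltW am).
  - move=> w; rewrite in_cons => /orP[/eqP -> _|]; last exact: IH2.
    by rewrite leNgt am.
  - move=> w; rewrite in_cons => /orP[/eqP -> |]; last exact: IH2.
    by rewrite ac.
case: Hm => mc Hm.
exists ((m + c) / 2); split.
  move=> w ws; case: (boolP (w < c)) => wc.
    have := Hm w ws wc; move=> wm; apply/esym; apply/idP; lra.
  apply/esym/negP => wc'; move/negP: wc; apply; lra.
apply/negP => cs.
have := Hm _ cs; have : (m + c) / 2 < c by lra.
move=> -> /(_ isT); lra.
Qed.

Lemma joins_endpoint e x y : joins e x y -> endpoint e x /\ endpoint e y.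
Proof.
by case/joinsE => [[<- <-]|[<- <-]]; rewrite /endpoint !eqxx ?orbT.
Qed.

Lemma wcA_VA A (VA : {fset V}) c s x : (forall e, e \in A -> e.1.1 \in VA /\ e.1.2 \in VA) ->
  wc (below A c) s x -> s \in VA -> x \in VA.
Proof.
move=> hA [p /andP[w /eqP <-]]; elim: p s w => [|[f z] p IH] s //= /and3P[fB j w] sV.
apply: IH w _; move: fB; rewrite in_below => /andP[/hA [h1 h2] _].
by case: (joinsE j) => [[_ <-]|[<- _]].
Qed.

Lemma transfer (O A B S S' : {fset edge}) (VA nab : {fset V}) c :
  (forall e, e \in A -> e.1.1 \in VA /\ e.1.2 \in VA) ->
  (forall v, v \in nab -> v \in VA) ->
  (forall u v, u \in nab -> v \in nab -> wc (below A c) u v -> wc (below B c) u v) ->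
  (forall e, e \in O -> forall x, endpoint e x -> x \in VA -> x \in nab) ->
  (forall e, e \in S -> e \in O \/ e \in A) ->
  {subset O <= S'} -> {subset B <= S'} ->
  forall x y, (x \in VA -> x \in nab) -> (y \in VA -> y \in nab) ->
  wc (below S c) x y -> wc (below S' c) x y.
Proof.
move=> hA hn hAB hO hS sO sB x y gx gy [p /andP[w /eqP ly]].
have sBS : {subset below B c <= below S' c}.
  by move=> e; rewrite !in_below => /andP[/sB -> ->].
suff H : forall p x s, walk (below S c) x p -> (last x (map snd p) \in VA -> last x (map snd p) \in nab) ->
  ((s \in nab /\ wc (below A c) s x) \/ (s = x /\ (x \in VA -> x \in nab))) ->
  wc (below S' c) s (last x (map snd p)).
  by rewrite -ly; apply: H => //; [rewrite ly | right].
clear x y gx gy p w ly.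
elim=> [|[f z] p IH] x s /=.
  move=> _ gx [[sn sx]|[-> _]]; last exact: wc_refl.
  apply: wc_mono sBS _; apply: hAB => //; apply: gx; apply: wcA_VA hA sx _.
  exact: hn.
case/and3P=> fB j w gl.
have [ex ez] := joins_endpoint j.
move: (fB); rewrite in_below => /andP[fS fc].
case: (hS f fS) => [fO|fA].
  move=> hs; have sx : wc (below S' c) s x.
    case: hs => [[sn sx]|[-> _]]; last exact: wc_refl.
    apply: wc_mono sBS _; apply: hAB => //; apply: hO fO _ ex _.
    by apply: wcA_VA hA sx _; apply: hn.
  apply: wc_trans sx _.
  apply: wc_trans (IH z z w gl _).
    by apply: wc_edge j; rewrite in_below sO.
  by right; split => //; apply: hO fO _ ez.
have fAB : f \in below A c by rewrite in_below fA.
case=> [[sn sx]|[-> gx]].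
  apply: IH w gl _; left; split => //.
  by apply: wc_trans sx (wc_edge fAB j).
apply: IH w gl _; left; split.
  apply: gx; have [h1 h2] := hA f fA.
  by case: (joinsE j) => [[<- _]|[_ <-]].
exact: wc_edge fAB j.
Qed.

End Aux.

Theorem lemma5p10 (V : choiceType) (R : realFieldType)
  (G H : graph V R) (nab : {fset V}) :
  wf G -> wf H -> distinct_w (gE G) -> distinct_w (gE H) ->
  nab `<=` gV G -> nab `<=` gV H ->
  compresses G H nab <->
  (forall u v, u \in nab -> v \in nab -> forall c : R,
     path_below (gE H) u v c <-> path_below (gE G) u v c).
Proof.
move=> wfG wfH dG dH nG nH; split.
- move=> hc u v hu hv c.
  have [c' [hc' nc']] := fresh [seq f.2 | f <- gE G `|` gE H] c.
  have inS : forall f, f \in gE G `|` gE H -> f.2 \in [seq f.2 | f <- gE G `|` gE H].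
    by move=> f hf; apply: map_f.
  have fG : forall f, f \in gE G -> f.2 != c'.
    by move=> f hf; apply/eqP => h; move: nc'; rewrite -h inS // in_fsetU hf.
  have fH : forall f, f \in gE H -> f.2 != c'.
    by move=> f hf; apply/eqP => h; move: nc'; rewrite -h inS // in_fsetU hf orbT.
  have ltG : forall f, f \in gE G -> (f.2 < c) = (f.2 < c').
    by move=> f hf; apply: hc'; apply: inS; rewrite in_fsetU hf.
  have ltH : forall f, f \in gE H -> (f.2 < c) = (f.2 < c').
    by move=> f hf; apply: hc'; apply: inS; rewrite in_fsetU hf orbT.
  have uG : u \in gV G := fsubsetP nG u hu.
  have vG : v \in gV G := fsubsetP nG v hv.
  pose e : edge V R := ((u, v), c').
  have eG : e \notin gE G by apply/negP => /fG; rewrite eqxx.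
  pose G' := Graph (gV G) (e |` gE G).
  have hO : forall x, (x \in gE G' `\` gE G) = (x == e).
    move=> x; rewrite in_fsetD /= in_fset1U.
    by case: eqVneq => [->|_] /=; [rewrite eG | rewrite andNb].
  have wfG' : wf G'.
    by move=> f; rewrite /= in_fset1U => /orP[/eqP ->|/wfG //].
  have sub : subgraph G G'.
    by split; [exact: fsubset_refl | apply/fsubsetP => f fG'; rewrite /= in_fset1U fG' orbT].
  have dG' : distinct_w (gE G').
    move=> x y; rewrite /= !in_fset1U => /orP[/eqP->|xG] /orP[/eqP->|yG] /= h //.
    + by move: (fG y yG); rewrite -h eqxx.
    + by move: (fG x xG); rewrite h eqxx.
    + exact: dG.
  pose U := (gE G' `\` gE G) `|` gE H.
  have dU : distinct_w U.
    move=> x y; rewrite /U !in_fsetU !hO => /orP[/eqP->|xG] /orP[/eqP->|yG] /= h //.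
    + by move: (fH y yG); rewrite -h eqxx.
    + by move: (fH x xG); rewrite h eqxx.
    + exact: dH.
  have hb : forall f, f \in gE G' `\` gE G -> forall x, endpoint f x -> x \in nab.
    by move=> f; rewrite hO => /eqP -> x; rewrite /endpoint /= => /orP[/eqP->|/eqP->].
  have [T mT] := msf_exists (gE G').
  have [T' mT'] := msf_exists U.
  have mT0 : msf (gE G') T by apply/msfE.
  have mT0' : msf U T' by apply/msfE.
  have heq := hc G' wfG' sub dG' dU (fun f hf x hx _ => hb f hf x hx)
     (fun f hf x hx _ => hb f hf x hx) T T' mT0 mT0'.
  have eTT : (e \in T) = (e \in T').
    by have := congr1 (fun X => e \in X) heq; rewrite /= !in_fsetI hO eqxx !andbT.
  have eG' : e \in gE G' by rewrite /= in_fset1U eqxx.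
  have eU : e \in U by rewrite /U in_fsetU hO eqxx.
  have c1 := CP dG' mT eG'; have c2 := CP dU mT' eU.
  have W1 : wc (below (gE G) c) u v <-> wc (below (gE G') c') u v.
    split; apply: wc_mono => f; rewrite !in_below /=.
    + by case/andP => fG' flt; rewrite in_fset1U fG' orbT -ltG.
    + rewrite in_fset1U => /andP[/orP[/eqP -> |fG' ]]; first by rewrite ltxx.
      by rewrite fG' ltG.
  have W2 : wc (below (gE H) c) u v <-> wc (below U c') u v.
    split; apply: wc_mono => f; rewrite !in_below /=.
    + by case/andP => fH' flt; rewrite /U in_fsetU fH' orbT -ltH.
    + rewrite /U in_fsetU hO => /andP[/orP[/eqP -> |fH' ]]; first by rewrite ltxx.
      by rewrite fH' ltH.
  rewrite !path_below_wc W1 W2; split => h.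
  + case: (classic (wc (below (gE G') c') u v)) => // n.
    have : e \in T by apply/c1.
    by rewrite eTT => /c2.
  + case: (classic (wc (below U c') u v)) => // n.
    have : e \in T' by apply/c2.
    by rewrite -eTT => /c1.
- move=> hii G' wfG' [_ sGG'] dG' dU hb1 hb2 T T' /msfE mT /msfE mT'.
  apply/fsetP => e; rewrite !inE.
  case: (boolP (e \in gE G)) => eG; rewrite ?andbF //= ?andbT.
  case: (boolP (e \in gE G')) => eG'; rewrite ?andbF //= ?andbT.
  have eO : e \in gE G' `\` gE G by rewrite !inE eG eG'.
  have eU : e \in (gE G' `\` gE G) `|` gE H by rewrite !inE eG eG'.
  have g1 : forall x, endpoint e x -> x \in gV G -> x \in nab := hb1 e eO.
  have g2 : forall x, endpoint e x -> x \in gV H -> x \in nab := hb2 e eO.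
  have ee1 : endpoint e e.1.1 by rewrite /endpoint eqxx.
  have ee2 : endpoint e e.1.2 by rewrite /endpoint eqxx orbT.
  have HGH : wc (below (gE G') e.2) e.1.1 e.1.2 <->
             wc (below ((gE G' `\` gE G) `|` gE H) e.2) e.1.1 e.1.2.
    split.
    + apply: (@transfer _ _ (gE G' `\` gE G) (gE G) (gE H) _ _ (gV G) nab).
      * by move=> f /wfG.
      * by move=> w; apply: (fsubsetP nG).
      * by move=> x y hx hy /path_below_wc /(hii x y hx hy) /path_below_wc.
      * exact: hb1.
      * by move=> f fG'; case: (boolP (f \in gE G)) => fG; [right|left; rewrite !inE fG].
      * by move=> f fO; rewrite in_fsetU fO.
      * by move=> f fH; rewrite in_fsetU fH orbT.
      * exact: g1.
      * exact: g1.
    + apply: (@transfer _ _ (gE G' `\` gE G) (gE H) (gE G) _ _ (gV H) nab).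
      * by move=> f /wfH.
      * by move=> w; apply: (fsubsetP nH).
      * by move=> x y hx hy /path_below_wc /(hii x y hx hy) /path_below_wc.
      * exact: hb2.
      * by move=> f; rewrite in_fsetU => /orP.
      * by move=> f; rewrite !inE => /andP[_ ->].
      * by move=> f /(fsubsetP sGG').
      * exact: g2.
      * exact: g2.
  have c1 := CP dG' mT eG'; have c2 := CP dU mT' eU.
  apply/idP/idP => h.
  + by apply/c2 => hw; apply: (c1.1 h); apply/HGH.
  + by apply/c1 => hw; apply: (c2.1 h); apply/HGH.
Qed.
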